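(* Let $\mathcal{A}$ be a complex vector space with two bilinear operations $[\cdot,\cdot]$ and $\circ$ and a linear endomorphism $\alpha$. Let $\mathcal{L}(\mathcal{A})=\mathcal{A}\otimes\mathbb{C}[t,t^{-1}]$ with bilinear bracket $[u\otimes t^m,v\otimes t^n]=[u,v]\otimes t^{m+n}+m\,(u\circ v)\otimes t^{m+n-1}-n\,(v\circ u)\otimes t^{m+n-1}$ for $u,v\in\mathcal{A}$, $m,n\in\mathbb{Z}$, and linear map $\varphi(u\otimes t^m)=\alpha(u)\otimes t^m$. Then $(\mathcal{L}(\mathcal{A}),[-,-],\varphi)$ is a Hom-Lie algebra if and only if $(\mathcal{A},[\cdot,\cdot],\circ,\alpha)$ is a Hom Gel'fand-Dorfman bialgebra.
   Context: A Hom-Lie algebra is a vector space $L$ with a bilinear map $[\cdot,\cdot]$ and linear map $\alpha$ with $[x,y]=-[y,x]$ and $[[x,y],\alpha(z)]+[[y,z],\alpha(x)]+[[z,x],\alpha(y)]=0$ for all $x,y,z$. A Hom-Novikov algebra is a vector space with a bilinear operation $\circ$ and a linear endomorphism $\alpha$ such that $(x\circ y)\circ\alpha(z)-\alpha(x)\circ(y\circ z)=(y\circ x)\circ\alpha(z)-\alpha(y)\circ(x\circ z)$ and $(x\circ y)\circ\alpha(z)=(x\circ z)\circ\alpha(y)$ for all $x,y,z$. A Hom Gel'fand-Dorfman bialgebra is a vector space $\mathcal{A}$ with a linear endomorphism $\alpha$ and two bilinear operations $[\cdot,\cdot],\circ$ such that $(\mathcal{A},[\cdot,\cdot],\alpha)$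 is a Hom-Lie algebra, $(\mathcal{A},\circ,\alpha)$ is a Hom-Novikov algebra, and $[x\circ y,\alpha(z)]-[x\circ z,\alpha(y)]+[x,y]\circ\alpha(z)-[x,z]\circ\alpha(y)-\alpha(x)\circ[y,z]=0$ for all $x,y,z$. *)

(* Defs.v *)
From HB Require Import structures.
From mathcomp Require Import all_boot all_order all_algebra.
From mathcomp Require Import boolp classical_sets functions.
From mathcomp Require Import reals.
From mathcomp Require Export complex.
From mathcomp Require Import zify.

Set Implicit Arguments.
Unset Strict Implicit.
Unset Printing Implicit Defensive.

Import Order.TTheory GRing.Theory Num.Theory.
Local Open Scope ring_scope.

Section Notions.
Variables (K : fieldType) (V : lmodType K).

Definition bilinear_op (b : V -> V -> V) : Prop :=
  (forall u, linear (b u)) /\ (forall v, linear (fun u => b u v)).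

Definition HomLie (b : V -> V -> V) (a : V -> V) : Prop :=
  [/\ bilinear_op b, linear a,
      (forall x y, b x y = - b y x) &
      (forall x y z, b (b x y) (a z) + b (b y z) (a x) + b (b z x) (a y) = 0)].

Definition HomNovikov (c : V -> V -> V) (a : V -> V) : Prop :=
  [/\ bilinear_op c, linear a,
      (forall x y z, c (c x y) (a z) - c (a x) (c y z)
                     = c (c y x) (a z) - c (a y) (c x z)) &
      (forall x y z, c (c x y) (a z) = c (c x z) (a y))].

Definition HomGD (b c : V -> V -> V) (a : V -> V) : Prop :=
  [/\ HomLie b a, HomNovikov c a &
      (forall x y z, b (c x y) (a z) - b (c x z) (a y) + c (b x y) (a z)
                     - c (b x z) (a y) - c (a x) (b y z) = 0)].

End Notions.

(* The loop space L(V) = V (x) K[t,t^-1], realised as the finitely     *)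
(* supported functions f : int -> V  (f n = coefficient of t^n).       *)
Section Loop.
Variables (K : fieldType) (V : lmodType K).

Definition fin_supp (f : int -> V) : Prop :=
  exists N : nat, forall n : int, (N < `|n|)%N -> f n = 0.

Definition fsuppb : {pred int -> V} := fun f => `[< fin_supp f >].

Lemma fsuppb_submod : submod_closed fsuppb.
Proof.
split; first by apply/asboolP; exists 0%N.
move=> a u v /asboolP [N1 H1] /asboolP [N2 H2]; apply/asboolP.
exists (maxn N1 N2) => n Hn.
have -> : (a *: u + v) n = a *: u n + v n by [].
rewrite H1 ?H2 ?scaler0 ?addr0 //; apply: leq_ltn_trans Hn;
  by rewrite ?leq_maxl ?leq_maxr.
Qed.

HB.instance Definition _ := GRing.isSubmodClosed.Build K (int -> V) fsuppb
  fsuppb_submod.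

Record loop := Loop { loopval :> int -> V ; loopvalP : loopval \in fsuppb }.

HB.instance Definition _ := [isSub for loopval].
HB.instance Definition _ := [Choice of loop by <:].
HB.instance Definition _ := [SubChoice_isSubLmodule of loop by <:].

Definition loop_bound (x : loop) : nat :=
  xget 0%N (fun N : nat => forall n : int, (N < `|n|)%N -> x n = 0).

Variables (b c : V -> V -> V).

(* Coefficient of t^k in [f, g], computed on the window [-N, N]:
   [u t^m, v t^n] = [u,v] t^(m+n) + m (u o v) t^(m+n-1) - n (v o u) t^(m+n-1) *)
Definition loop_brN (N : nat) (f g : int -> V) (k : int) : V :=
  \sum_(i < N.*2.+1) \sum_(j < N.*2.+1)
    (let m := (i%:Z - N%:Z)%R in let n := (j%:Z - N%:Z)%R in
     (if m + n == k then b (f m) (g n) else 0) +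
     (if m + n - 1 == k then m%:~R *: c (f m) (g n) - n%:~R *: c (g n) (f m)
      else 0)).

Lemma loop_brN_supp N f g : loop_brN N f g \in fsuppb.
Proof.
apply/asboolP; exists N.*2.+1 => k Hk.
apply: big1 => i _; apply: big1 => j _ /=.
have Hi := ltn_ord i; have Hj := ltn_ord j.
have -> : (i%:Z - N%:Z + (j%:Z - N%:Z) == k) = false by apply/eqP; lia.
have -> : (i%:Z - N%:Z + (j%:Z - N%:Z) - 1 == k) = false by apply/eqP; lia.
by rewrite addr0.
Qed.

Definition loop_br (x y : loop) : loop :=
  Loop (loop_brN_supp (maxn (loop_bound x) (loop_bound y)) x y).

Variable alpha : {linear V -> V}.

Lemma loop_phi_supp (x : loop) : (fun n => alpha (x n)) \in fsuppb.
Proof.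
case: x => f /= /asboolP [N HN]; apply/asboolP; exists N => n Hn.
by rewrite HN // linear0.
Qed.

Definition loop_phi (x : loop) : loop := Loop (loop_phi_supp x).

End Loop.

(* Main.v *)
Require Import Defs.
From HB Require Import structures.
From mathcomp Require Import all_boot all_order all_algebra.
From mathcomp Require Import boolp classical_sets functions reals complex.
From mathcomp Require Import ring zify.
Set Implicit Arguments. Unset Strict Implicit. Unset Printing Implicit Defensive.
Import GRing.Theory Num.Theory.
Local Open Scope ring_scope.

Definition dual (K : comNzRingType) (V : lmodType K) := (K * V)%type.
Section DualDef.
Variables (K : comNzRingType) (V : lmodType K).
HB.instance Definition _ := GRing.Zmodule.on (dual V).
Definition dmul (x y : dual V) : dual V := (x.1 * y.1, x.1 *: y.2 + y.1 *: x.2).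
Definition done_ : dual V := (1, 0).
Lemma dmulA : associative dmul.
Proof. move=> [a u] [b v] [c w]; rewrite /dmul /=; congr pair; first by rewrite mulrA.
by rewrite !scalerDr !scalerA [c * a]mulrC [c * b]mulrC addrA. Qed.
Lemma dmulC : commutative dmul.
Proof. move=> [a u] [b v]; by rewrite /dmul /= mulrC addrC. Qed.
Lemma dmul1 : left_id done_ dmul.
Proof. by move=> [a u]; rewrite /dmul /= mul1r scale1r scaler0 addr0. Qed.
Lemma dmulD : left_distributive dmul +%R.
Proof. move=> [a u] [b v] [c w]; rewrite /dmul /=; congr pair; first by rewrite mulrDl.
by rewrite scalerDl scalerDr addrACA. Qed.
Lemma done_neq0 : done_ != 0.
Proof. by apply/eqP => -[] /eqP; rewrite oner_eq0. Qed.
HB.instance Definition _ := GRing.Zmodule_isComNzRing.Build (dual V) dmulA dmulC dmul1 dmulD done_neq0.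

Definition inj (v : V) : dual V := (0, v).
Definition sc (a : K) : dual V := (a, 0).
Lemma injD x y : inj (x + y) = inj x + inj y. Proof. by apply: injective_projections => /=; rewrite ?addr0. Qed.
Lemma injN x : inj (- x) = - inj x. Proof. by apply: injective_projections => /=; rewrite ?oppr0. Qed.
Lemma inj0 : inj 0 = 0. Proof. by []. Qed.
Lemma injZ a x : inj (a *: x) = sc a * inj x.
Proof. by rewrite /inj /sc /= /GRing.mul /= /dmul /= mulr0 scale0r addr0. Qed.
Lemma scD a b : sc (a + b) = sc a + sc b. Proof. by apply: injective_projections => /=; rewrite ?addr0. Qed.
Lemma scN a : sc (- a) = - sc a. Proof. by apply: injective_projections => /=; rewrite ?oppr0. Qed.
Lemma scM a b : sc (a * b) = sc a * sc b.
Proof. by rewrite /sc /GRing.mul /= /dmul /= !scaler0 addr0. Qed.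
Lemma sc1 : sc 1 = 1. Proof. by []. Qed.
Lemma sc0 : sc 0 = 0. Proof. by []. Qed.
Lemma sc_nat n : sc n%:R = n%:R.
Proof. elim: n => [//|n IH]; by rewrite -addn1 !natrD scD IH. Qed.
Lemma sc_int z : sc z%:~R = z%:~R.
Proof. case: z => n; first by rewrite sc_nat.
by rewrite !NegzE !mulrNz scN sc_nat. Qed.
Lemma inj_inj x y : inj x = inj y -> x = y.
Proof. by move=> /(congr1 snd). Qed.
End DualDef.

Ltac dual_ring := apply: inj_inj;
  rewrite ?(injD, injN, inj0, injZ, scD, scN, scM, sc1, sc0, sc_int);
  ring.

Section Lin.
Variables (K : fieldType) (V : lmodType K) (f : V -> V) (hf : linear f).
Lemma lin0 : f 0 = 0.
Proof. by have := hf (-1) 0 0; rewrite scaler0 add0r scaleN1r addNr. Qed.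
Lemma linD x y : f (x + y) = f x + f y.
Proof. by have := hf 1 x y; rewrite !scale1r. Qed.
Lemma linZ a x : f (a *: x) = a *: f x.
Proof. by have := hf a x 0; rewrite !addr0 lin0 addr0. Qed.
Lemma linN x : f (- x) = - f x.
Proof. by rewrite -scaleN1r linZ scaleN1r. Qed.
End Lin.

Section Win.
Variable (V : zmodType).
Definition wsum (N : nat) (G : int -> V) := \sum_(i < N.*2.+1) G (i%:Z - N%:Z).

Lemma wsumS N G : G (- (N.+1)%:Z) = 0 -> G (N.+1)%:Z = 0 -> wsum N.+1 G = wsum N G.
Proof.
move=> h1 h2; rewrite /wsum.
have -> : (N.+1).*2.+1 = (N.*2.+1).+2 by rewrite doubleS.
rewrite big_ord_recr big_ord_recl.
have -> : ((@ord0 (N.*2.+2) : nat)%:Z - (N.+1)%:Z) = - (N.+1)%:Z by rewrite sub0r.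
have -> : ((@ord_max (N.*2.+2) : nat)%:Z - (N.+1)%:Z) = (N.+1)%:Z.
  by rewrite [(ord_max : nat)]/=; lia.
rewrite h1 h2 !Monoid.simpm; apply: eq_bigr => i _; congr G.
rewrite (_ : (widen_ord (leqnSn _) (lift ord0 i) : nat) = i.+1) //; lia.
Qed.
Lemma wsum_ext N0 M G : (forall k, (N0 < `|k|)%N -> G k = 0) -> (N0 <= M)%N ->
  wsum M G = wsum N0 G.
Proof.
move=> hG; elim: M => [|M IH]; first by rewrite leqn0 => /eqP ->.
rewrite leq_eqVlt => /orP [/eqP -> //| hM].
rewrite wsumS ?IH //; apply: hG; rewrite ?abszN; lia.
Qed.

Lemma wsum_single N G (l : int) : (`|l| <= N)%N -> (forall p, p != l -> G p = 0) ->
  wsum N G = G l.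
Proof.
move=> hl hG; rewrite /wsum.
have hi : (absz (l + N%:Z)%R < N.*2.+1)%N by lia.
rewrite (bigD1 (Ordinal hi)) // big1 ?Monoid.simpm.
  by congr G; rewrite [(Ordinal _ : nat)]/=; lia.
move=> i hi'; apply: hG; apply/eqP => e; move/eqP: hi'; apply.
by apply/val_inj; rewrite [val (Ordinal _)]/= -e subrK absz_nat.
Qed.

Definition dsum N (H : int -> int -> V) := wsum N (fun p => wsum N (fun q => H p q)).

Lemma dsum_ext N0 M1 M2 H :
  (forall p q, (N0 < `|p|)%N || (N0 < `|q|)%N -> H p q = 0) ->
  (N0 <= M1)%N -> (N0 <= M2)%N -> dsum M1 H = dsum M2 H.
Proof.
move=> hH h1 h2.
suff e : forall M, (N0 <= M)%N -> dsum M H = dsum N0 H by rewrite !e.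
move=> M hM; rewrite /dsum (wsum_ext _ hM).
  apply: eq_bigr => i _; apply: wsum_ext hM => q hq; apply: hH; by rewrite hq orbT.
move=> p hp; rewrite /wsum big1 // => i _; by apply: hH; rewrite hp.
Qed.
End Win.

Section Main.
Variables (R : realType) (A : lmodType R[i]) (br circ : A -> A -> A)
  (alpha : {linear A -> A}) (hbr : bilinear_op br) (hcirc : bilinear_op circ).
Local Notation L := (loop A).

Lemma br0l v : br 0 v = 0. Proof. exact: (lin0 (hbr.2 v)). Qed.
Lemma brDl u1 u2 v : br (u1 + u2) v = br u1 v + br u2 v. Proof. exact: (linD (hbr.2 v)). Qed.
Lemma brNl u v : br (- u) v = - br u v. Proof. exact: (linN (hbr.2 v)). Qed.
Lemma brZl a u v : br (a *: u) v = a *: br u v. Proof. exact: (linZ (hbr.2 v)). Qed.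
Lemma br0r v : br v 0 = 0. Proof. exact: (lin0 (hbr.1 v)). Qed.
Lemma brDr u1 u2 v : br v (u1 + u2) = br v u1 + br v u2. Proof. exact: (linD (hbr.1 v)). Qed.
Lemma brNr u v : br v (- u) = - br v u. Proof. exact: (linN (hbr.1 v)). Qed.
Lemma brZr a u v : br v (a *: u) = a *: br v u. Proof. exact: (linZ (hbr.1 v)). Qed.
Lemma ci0l v : circ 0 v = 0. Proof. exact: (lin0 (hcirc.2 v)). Qed.
Lemma ciDl u1 u2 v : circ (u1 + u2) v = circ u1 v + circ u2 v. Proof. exact: (linD (hcirc.2 v)). Qed.
Lemma ciNl u v : circ (- u) v = - circ u v. Proof. exact: (linN (hcirc.2 v)). Qed.
Lemma ciZl a u v : circ (a *: u) v = a *: circ u v. Proof. exact: (linZ (hcirc.2 v)). Qed.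
Lemma ci0r v : circ v 0 = 0. Proof. exact: (lin0 (hcirc.1 v)). Qed.
Lemma ciDr u1 u2 v : circ v (u1 + u2) = circ v u1 + circ v u2. Proof. exact: (linD (hcirc.1 v)). Qed.
Lemma ciNr u v : circ v (- u) = - circ v u. Proof. exact: (linN (hcirc.1 v)). Qed.
Lemma ciZr a u v : circ v (a *: u) = a *: circ v u. Proof. exact: (linZ (hcirc.1 v)). Qed.

Definition supp M (f : int -> A) := forall n : int, (M < `|n|)%N -> f n = 0.

Lemma bound_supp (x : L) : supp (loop_bound x) x.
Proof.
rewrite /loop_bound /supp; apply: (xgetPex 0%N (P := fun N : nat => forall n : int, (N < `|n|)%N -> x n = 0)).
by case: x => f /= /asboolP.
Qed.

Lemma supp_le M M' f : (M <= M')%N -> supp M f -> supp M' f.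
Proof. move=> hM h n hn; apply: h; exact: leq_ltn_trans hM hn. Qed.

Lemma supp_min M M' f : supp M f -> supp M' f -> supp (minn M M') f.
Proof. by move=> h h' n; rewrite /minn; case: ifP => _; [apply: h|apply: h']. Qed.

Definition Fb (x y : int -> A) (p q k : int) : A :=
  (if p + q == k then br (x p) (y q) else 0) +
  (if p + q - 1 == k then p%:~R *: circ (x p) (y q) - q%:~R *: circ (y q) (x p) else 0).

Lemma Fb0 (x y : int -> A) M k : supp M x -> supp M y ->
  forall p q, (M < `|p|)%N || (M < `|q|)%N -> Fb x y p q k = 0.
Proof.
move=> hx hy p q /orP [h|h]; rewrite /Fb ?(hx _ h) ?(hy _ h);
 by rewrite ?br0l ?br0r ?ci0l ?ci0r ?scaler0 ?subrr !if_same addr0.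
Qed.

Lemma loop_brE (x y : L) M k : supp M x -> supp M y ->
  loop_br br circ x y k = dsum M (fun p q => Fb x y p q k).
Proof.
move=> hx hy.
set M0 := maxn (loop_bound x) (loop_bound y).
have -> : loop_br br circ x y k = dsum M0 (fun p q => Fb x y p q k) by [].
have hx0 : supp M0 x by exact: supp_le (leq_maxl _ _) (@bound_supp x).
have hy0 : supp M0 y by exact: supp_le (leq_maxr _ _) (@bound_supp y).
apply: (dsum_ext (N0 := minn M M0)); rewrite ?geq_minl ?geq_minr //.
by apply: Fb0; apply: supp_min.
Qed.

Lemma loopD (x y : L) k : (x + y) k = x k + y k. Proof. by []. Qed.
Lemma loopZ a (x : L) k : (a *: x) k = a *: x k. Proof. by []. Qed.
Lemma loopN (x : L) k : (- x) k = - x k. Proof. by []. Qed.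
Lemma loop0 k : (0 : L) k = 0. Proof. by []. Qed.
Lemma loop_eq (x y : L) : (forall k, x k = y k) -> x = y.
Proof. by move=> h; apply: val_inj; apply: funext. Qed.

Lemma Fb_x0 (x y : int -> A) p q k : x p = 0 -> Fb x y p q k = 0.
Proof. by move=> h; rewrite /Fb h br0l ci0l ci0r !scaler0 subrr !if_same addr0. Qed.
Lemma Fb_y0 (x y : int -> A) p q k : y q = 0 -> Fb x y p q k = 0.
Proof. by move=> h; rewrite /Fb h br0r ci0l ci0r !scaler0 subrr !if_same addr0. Qed.

Definition monof (u : A) (e : int) : int -> A := fun n => if n == e then u else 0.
Lemma mono_supp u e : monof u e \in @fsuppb _ A.
Proof.
apply/asboolP; exists `|e|%N => n hn; rewrite /monof.
by case: eqP => // h; move: hn; rewrite h ltnn.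
Qed.
Definition mono u e : L := Loop (mono_supp u e).
Lemma monoE u e k : mono u e k = if k == e then u else 0. Proof. by []. Qed.
Lemma supp_mono u e N : (`|e| <= N)%N -> supp N (mono u e).
Proof.
move=> he n hn; rewrite monoE; case: eqP => // h; move: hn; rewrite h.
by move=> hn; exfalso; lia.
Qed.

Lemma mono_br u l v m : loop_br br circ (mono u l) (mono v m) =
  mono (br u v) (l + m) + mono (l%:~R *: circ u v - m%:~R *: circ v u) (l + m - 1).
Proof.
apply: loop_eq => k; set N := maxn `|l| `|m|.
rewrite (@loop_brE _ _ N); last 2 first.
  exact: supp_mono (leq_maxl _ _).
  exact: supp_mono (leq_maxr _ _).
rewrite /dsum.
rewrite (@wsum_single _ N _ l) ?leq_maxl //; last first.
  move=> p hp; rewrite /wsum big1 // => i _; apply: Fb_x0; by rewrite monoE (negbTE hp).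
rewrite (@wsum_single _ N _ m) ?leq_maxr //; last first.
  move=> q hq; apply: Fb_y0; by rewrite monoE (negbTE hq).
by rewrite /Fb loopD !monoE !eqxx (eq_sym (l + m)) (eq_sym (l + m - 1)).
Qed.

Lemma phi_mono u e : loop_phi alpha (mono u e) = mono (alpha u) e.
Proof. apply: loop_eq => k; rewrite monoE /= /monof; by case: eqP => _; rewrite ?linear0. Qed.

Ltac bsimp := rewrite ?(brDl, brDr, brNl, brNr, brZl, brZr, br0l, br0r,
  ciDl, ciDr, ciNl, ciNr, ciZl, ciZr, ci0l, ci0r).

Lemma supp_lin a (y z : L) N : supp N y -> supp N z -> supp N (a *: y + z).
Proof. by move=> hy hz n hn; rewrite loopD loopZ hy // hz // scaler0 addr0. Qed.

Lemma br_linr (x : L) : linear (loop_br br circ x).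
Proof.
move=> a y z; apply: loop_eq => k.
set N := maxn (loop_bound x) (maxn (loop_bound y) (loop_bound z)).
have hx : supp N x by apply: supp_le (@bound_supp x); rewrite leq_maxl.
have hy : supp N y by apply: supp_le (@bound_supp y); lia.
have hz : supp N z by apply: supp_le (@bound_supp z); lia.
rewrite loopD loopZ !(@loop_brE _ _ N) //; last exact: supp_lin.
rewrite /dsum /wsum scaler_sumr -big_split; apply: eq_bigr => i _.
rewrite scaler_sumr -big_split; apply: eq_bigr => j _.
rewrite /Fb !loopD !loopZ.
case: ifP => _; case: ifP => _; bsimp; dual_ring.
Qed.

Lemma br_linl (y : L) : linear (fun x => loop_br br circ x y).
Proof.
move=> a x z; apply: loop_eq => k.
set N := maxn (loop_bound y) (maxn (loop_bound x) (loop_bound z)).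
have hy : supp N y by apply: supp_le (@bound_supp y); rewrite leq_maxl.
have hx : supp N x by apply: supp_le (@bound_supp x); lia.
have hz : supp N z by apply: supp_le (@bound_supp z); lia.
rewrite loopD loopZ !(@loop_brE _ _ N) //; last exact: supp_lin.
rewrite /dsum /wsum scaler_sumr -big_split; apply: eq_bigr => i _.
rewrite scaler_sumr -big_split; apply: eq_bigr => j _.
rewrite /Fb !loopD !loopZ.
case: ifP => _; case: ifP => _; bsimp; dual_ring.
Qed.

Lemma phi_lin : linear (loop_phi alpha).
Proof. move=> a x y; apply: loop_eq => k; by rewrite /= linearD linearZ. Qed.

Local Notation lbr := (loop_br br circ).
Local Notation phi := (loop_phi alpha).

Lemma lbrDl x1 x2 y : lbr (x1 + x2) y = lbr x1 y + lbr x2 y.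
Proof. exact: (linD (br_linl y)). Qed.
Lemma lbrDr x y1 y2 : lbr x (y1 + y2) = lbr x y1 + lbr x y2.
Proof. exact: (linD (br_linr x)). Qed.
Lemma lbr0l y : lbr 0 y = 0. Proof. exact: (lin0 (br_linl y)). Qed.
Lemma lbr0r x : lbr x 0 = 0. Proof. exact: (lin0 (br_linr x)). Qed.
Lemma phiD x y : phi (x + y) = phi x + phi y. Proof. exact: (linD phi_lin). Qed.
Lemma phi0 : phi 0 = 0. Proof. exact: (lin0 phi_lin). Qed.

Lemma br_skew (hs : forall u v, br u v = - br v u) x y : lbr x y = - lbr y x.
Proof.
apply: loop_eq => k.
set N := maxn (loop_bound x) (loop_bound y).
have hx : supp N x by apply: supp_le (@bound_supp x); rewrite leq_maxl.
have hy : supp N y by apply: supp_le (@bound_supp y); rewrite leq_maxr.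
rewrite loopN !(@loop_brE _ _ N) // /dsum /wsum [in RHS]exchange_big -sumrN.
apply: eq_bigr => i _; rewrite -sumrN; apply: eq_bigr => j _.
rewrite /Fb [_ + (i%:Z - N%:Z)]addrC [br (y _) _]hs.
case: ifP => _; case: ifP => _; dual_ring.
Qed.

Definition Jac x y z := lbr (lbr x y) (phi z) + lbr (lbr y z) (phi x) + lbr (lbr z x) (phi y).

Lemma JacD x1 x2 y z : Jac (x1 + x2) y z = Jac x1 y z + Jac x2 y z.
Proof. rewrite /Jac !lbrDl !lbrDr !phiD !lbrDr !lbrDl; dual_ring. Qed.
Lemma Jac0 y z : Jac 0 y z = 0.
Proof. by rewrite /Jac !lbr0l !lbr0r phi0 !lbr0r lbr0l !addr0. Qed.
Lemma JacC x y z : Jac x y z = Jac y z x.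
Proof. rewrite /Jac; dual_ring. Qed.

Lemma loop_sum I r (P : pred I) (F : I -> L) k :
  (\sum_(i <- r | P i) F i) k = \sum_(i <- r | P i) F i k.
Proof. elim/big_rec2: _ => // i a b _ <-; by rewrite loopD. Qed.

Lemma loop_decomp (x : L) N : supp N x ->
  x = \sum_(i < N.*2.+1) mono (x (i%:Z - N%:Z)) (i%:Z - N%:Z).
Proof.
move=> hx; apply: loop_eq => k; rewrite loop_sum.
transitivity (wsum N (fun p => mono (x p) p k)); last by [].
have [hk|hk] := leqP `|k| N.
  rewrite (@wsum_single _ N (fun p => mono (x p) p k) k) // ?monoE ?eqxx //.
  by move=> p hp; rewrite monoE eq_sym (negbTE hp).
rewrite hx // /wsum big1 // => i _; rewrite monoE.
case: eqP => // e; exfalso; have := ltn_ord i; lia.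
Qed.

Lemma Jac_sum1 I r (P : pred I) (F : I -> L) y z :
  Jac (\sum_(i <- r | P i) F i) y z = \sum_(i <- r | P i) Jac (F i) y z.
Proof. exact: (big_morph (fun x => Jac x y z) (fun a b => JacD a b y z) (Jac0 y z)). Qed.

Lemma Jac_mono_all (h : forall u l v m w n, Jac (mono u l) (mono v m) (mono w n) = 0) x y z :
  Jac x y z = 0.
Proof.
rewrite (loop_decomp (@bound_supp x)) Jac_sum1 big1 // => i _.
rewrite JacC (loop_decomp (@bound_supp y)) Jac_sum1 big1 // => j _.
rewrite JacC (loop_decomp (@bound_supp z)) Jac_sum1 big1 // => k _.
Qed.

Definition P1 u (l : int) v (m : int) := l%:~R *: circ u v - m%:~R *: circ v u.
Definition S0 u v w := br (br u v) (alpha w) + br (br v w) (alpha u) + br (br w u) (alpha v).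
Definition T1 u l v m w n := P1 (br u v) (l + m) (alpha w) n + br (P1 u l v m) (alpha w).
Definition S1 u l v m w n := T1 u l v m w n + T1 v m w n u l + T1 w n u l v m.
Definition T2 u l v m w n := P1 (P1 u l v m) (l + m - 1) (alpha w) n.
Definition S2 u l v m w n := T2 u l v m w n + T2 v m w n u l + T2 w n u l v m.

Ltac decide_eqs :=
  repeat match goal with |- context[(?a == ?b :> int)] =>
    first [ rewrite (_ : (a == b) = true); last by apply/eqP; lia
          | rewrite (_ : (a == b) = false); last by apply/eqP; lia ] end.

Lemma JacM u l v m w n : Jac (mono u l) (mono v m) (mono w n) =
  mono (S0 u v w) (l + m + n) + mono (S1 u l v m w n) (l + m + n - 1)
  + mono (S2 u l v m w n) (l + m + n - 2).
Proof.
rewrite /Jac !phi_mono !mono_br !lbrDl !mono_br.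
apply: loop_eq => k; rewrite !loopD !monoE /S0 /S1 /S2 /T1 /T2 /P1.
have [->|h0] := eqVneq k (l + m + n); first by decide_eqs; dual_ring.
have [->|h1] := eqVneq k (l + m + n - 1); first by decide_eqs; dual_ring.
have [->|h2] := eqVneq k (l + m + n - 2); first by decide_eqs; dual_ring.
by decide_eqs; dual_ring.
Qed.

Lemma mono0 e : mono 0 e = 0.
Proof. by apply: loop_eq => k; rewrite monoE loop0 if_same. Qed.

Lemma forward : HomGD br circ alpha -> HomLie lbr phi.
Proof.
case=> [[_ _ hs hj] [_ _ hN1 hN2] hc].
split.
- by split; [exact: br_linr | exact: br_linl].
- exact: phi_lin.
- exact: br_skew.
- apply: Jac_mono_all => u l v m w n; rewrite JacM.
  have -> : S0 u v w = 0 by apply: hj.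
  have -> : S1 u l v m w n = 0.
    transitivity (l%:~R *: (br (circ u v) (alpha w) - br (circ u w) (alpha v) + circ (br u v) (alpha w)
                     - circ (br u w) (alpha v) - circ (alpha u) (br v w))
                 + m%:~R *: (br (circ v w) (alpha u) - br (circ v u) (alpha w) + circ (br v w) (alpha u)
                     - circ (br v u) (alpha w) - circ (alpha v) (br w u))
                 + n%:~R *: (br (circ w u) (alpha v) - br (circ w v) (alpha u) + circ (br w u) (alpha v)
                     - circ (br w v) (alpha u) - circ (alpha w) (br u v))); last first.
      by rewrite !hc !scaler0 !addr0.
    rewrite /S1 /T1 /P1; bsimp.
    rewrite ?(hs v u) ?(hs w v) ?(hs u w); bsimp; dual_ring.
  have -> : S2 u l v m w n = 0.
    transitivity ((l%:~R * m%:~R) *: ((circ (circ u v) (alpha w) - circ (alpha u) (circ v w))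
                      - (circ (circ v u) (alpha w) - circ (alpha v) (circ u w)))
                + (m%:~R * n%:~R) *: ((circ (circ v w) (alpha u) - circ (alpha v) (circ w u))
                      - (circ (circ w v) (alpha u) - circ (alpha w) (circ v u)))
                + (n%:~R * l%:~R) *: ((circ (circ w u) (alpha v) - circ (alpha w) (circ u v))
                      - (circ (circ u w) (alpha v) - circ (alpha u) (circ w v)))); last first.
      by rewrite (hN1 u v w) (hN1 v w u) (hN1 w u v) !subrr !scaler0 !addr0.
    rewrite /S2 /T2 /P1; bsimp.
    rewrite (hN2 u w v) (hN2 v w u) (hN2 w v u); dual_ring.
  by rewrite !mono0 !addr0.
Qed.

Lemma JacS (hj : forall x y z, Jac x y z = 0) u l v m w n :
  [/\ S0 u v w = 0, S1 u l v m w n = 0 & S2 u l v m w n = 0].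
Proof.
have e := hj (mono u l) (mono v m) (mono w n); rewrite JacM in e.
have ev := fun k => congr1 (fun x : L => x k) e.
split.
- have := ev (l + m + n); rewrite !loopD !monoE loop0; decide_eqs; by rewrite !addr0.
- have := ev (l + m + n - 1); rewrite !loopD !monoE loop0; decide_eqs; by rewrite add0r addr0.
- have := ev (l + m + n - 2); rewrite !loopD !monoE loop0; decide_eqs; by rewrite !add0r.
Qed.

Lemma backward : HomLie lbr phi -> HomGD br circ alpha.
Proof.
case=> _ _ hsL hjL.
have hs : forall u v, br u v = - br v u.
  move=> u v; have := congr1 (fun x : L => x 0) (hsL (mono u 0) (mono v 0)).
  rewrite !mono_br loopN !loopD !monoE; decide_eqs; by rewrite !addr0.
have hj : forall x y z, Jac x y z = 0 := hjL.
have hN2 : forall x y z, circ (circ x y) (alpha z) = circ (circ x z) (alpha y).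
  move=> x y z; have [_ _ e] := JacS hj x 2 y 0 z 0.
  have : 2%:R *: (circ (circ x y) (alpha z) - circ (circ x z) (alpha y)) = S2 x 2 y 0 z 0.
    rewrite /S2 /T2 /P1; bsimp; dual_ring.
  rewrite e => /eqP; rewrite scaler_eq0 pnatr_eq0 /= subr_eq0 => /eqP //.
have hN1 : forall x y z, circ (circ x y) (alpha z) - circ (alpha x) (circ y z)
                     = circ (circ y x) (alpha z) - circ (alpha y) (circ x z).
  move=> x y z; have [_ _ e] := JacS hj x 1 y 1 z 0.
  have : (circ (circ x y) (alpha z) - circ (alpha x) (circ y z))
          - (circ (circ y x) (alpha z) - circ (alpha y) (circ x z)) = S2 x 1 y 1 z 0.
    rewrite /S2 /T2 /P1; bsimp; dual_ring.
  by rewrite e => /eqP; rewrite subr_eq0 => /eqP.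
have hc : forall x y z, br (circ x y) (alpha z) - br (circ x z) (alpha y) + circ (br x y) (alpha z)
                     - circ (br x z) (alpha y) - circ (alpha x) (br y z) = 0.
  move=> x y z; have [_ e _] := JacS hj x 1 y 0 z 0; rewrite -e.
  rewrite /S1 /T1 /P1; bsimp; rewrite (hs x z); bsimp; dual_ring.
have hjb : forall x y z, br (br x y) (alpha z) + br (br y z) (alpha x) + br (br z x) (alpha y) = 0.
  by move=> x y z; have [e _ _] := JacS hj x 0 y 0 z 0.
have hal : linear alpha by move=> a x y; rewrite linearP.
by split => //; split.
Qed.
End Main.

Unset Implicit Arguments.
Unset Strict Implicit.

Theorem theorem5p1 (R : realType) (A : lmodType R[i])
    (br circ : A -> A -> A) (alpha : {linear A -> A})
    (hbr : bilinear_op br) (hcirc : bilinear_op circ) :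
  HomLie (@loop_br _ A br circ) (loop_phi alpha) <-> HomGD br circ alpha.
Proof.
split; [exact: (@backward R A br circ alpha hbr hcirc) | exact: (@forward R A br circ alpha hbr hcirc)].
Qed.
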